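(* Let $(\mu_z^\varepsilon)$ be a time-analytic local random walk on $\mathcal G$. Then for every pair of distinct vertices $x,y$, \[ {}^{\mathcal O}\mathrm{Ric}(x,y)=\inf\Big\{\nabla_{yx}\mathcal L f\ :\ f:\mathcal K_{xy}\to\mathbb R,\ |f(u)-f(v)|\le\mathrm d(u,v)\ \forall u,v\in\mathcal K_{xy},\ \nabla_{xy}f=1\Big\}, \] where $\mathcal L f(z):=\sum_{w\neq z}\big(f(w)-f(z)\big)\,\frac{d}{d\varepsilon}\big|_{\varepsilon=0}\mu_z^\varepsilon(w)$.
   Context: $\mathcal G$ is a locally finite graph with vertex set $V$, distance $\mathrm d$ on $V$ with $(V,\mathrm d)$ complete. A random walk is a family of probability measures $\mu_z^\varepsilon$ ($z\in V$, $\varepsilon\in[0,1]$) with finite first moments, continuous in $\varepsilon$, $\mu_z^0=\delta_z$. It is local if for each $z$ there is a finite $\mathcal K_z\subset V$ with $\mathrm{supp}(\mu_z^\varepsilon)\subset\mathcal K_z$ for all $\varepsilon$ (so the sum defining $\mathcal Lf(z)$ runs over $w\in\mathcal K_z\setminus\{z\}$); $\mathcal K_{xy}:=\mathcal K_x\cup\mathcal K_y$. It is time-analytic if each $\varepsilon\mapsto\mu_x^\varepsilon(y)$ is analytic and extends analytically to $(-\delta_{xy},1+\delta_{xy})$ for some $\delta_{xy}>0$. ${}^{\mathcal O}\mathrm{Ric}_\varepsilon(x,y):=1-\mathcal W_1(\mu_x^\varepsilon,\mu_y^\varepsilon)/\mathrm d(x,y)$ and ${}^{\mathcal O}\mathrm{Ric}(x,y):=\lim_{\varepsilon\downarrow0}\varepsilon^{-1}{}^{\mathcal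 O}\mathrm{Ric}_\varepsilon(x,y)$. $\nabla_{xy}f:=(f(y)-f(x))/\mathrm d(x,y)$. *)

(* Defs.v *)
From Coquelicot Require Import Coquelicot.
From Stdlib Require Import Reals ClassicalEpsilon List Lra.
Open Scope R_scope.

Section Defs.
Variable V : Type.

Definition Vdec (a b : V) : {a = b} + {a <> b} := excluded_middle_informative (a = b).

(* sum of F over the finite set represented by the list l (duplicates removed) *)
Definition lsum (l : list V) (F : V -> R) : R :=
  fold_right Rplus 0 (map F (nodup Vdec l)).

Definition is_metric (d : V -> V -> R) : Prop :=
  (forall u v, 0 <= d u v) /\ (forall u v, d u v = 0 <-> u = v) /\
  (forall u v, d u v = d v u) /\ (forall u v w, d u w <= d u v + d v w).

Definition complete_metric (d : V -> V -> R) : Prop :=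
  forall s : nat -> V,
    (forall e, 0 < e -> exists N, forall n m, (N <= n)%nat -> (N <= m)%nat -> d (s n) (s m) < e) ->
    exists l, forall e, 0 < e -> exists N, forall n, (N <= n)%nat -> d (s n) l < e.

Definition locally_finite_graph (E : V -> V -> Prop) : Prop :=
  (forall u v, E u v -> E v u) /\ (forall u, ~ E u u) /\
  (forall u, exists l : list V, forall v, E u v -> In v l).

(* A random walk mu z eps w = mu_z^eps(w), eps in [0,1], which is local with
   supports in the finite sets K z (so each mu_z^eps is a finitely supported
   probability measure; finite first moments are then automatic). *)
Definition local_random_walk (mu : V -> R -> V -> R) (K : V -> list V) : Prop :=
  (forall z eps w, 0 <= eps <= 1 -> 0 <= mu z eps w) /\
  (forall z eps w, 0 <= eps <= 1 -> mu z eps w <> 0 -> In w (K z)) /\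
  (forall z eps, 0 <= eps <= 1 -> lsum (K z) (mu z eps) = 1) /\
  (forall z w, mu z 0 w = if Vdec w z then 1 else 0) /\
  (forall z w eps, 0 <= eps <= 1 ->
     forall e, 0 < e -> exists r, 0 < r /\
       forall s, 0 <= s <= 1 -> Rabs (s - eps) < r -> Rabs (mu z s w - mu z eps w) < e).

Definition analytic_on (g : R -> R) (a b : R) : Prop :=
  forall t, a < t < b -> exists (c : nat -> R) (r : R), 0 < r /\
    forall s, Rabs (s - t) < r -> is_pseries c (s - t) (g s).

Definition time_analytic (mu : V -> R -> V -> R) : Prop :=
  forall x y, exists delta, 0 < delta /\ exists g : R -> R,
    (forall eps, 0 <= eps <= 1 -> g eps = mu x eps y) /\ analytic_on g (- delta) (1 + delta).

Definition has_rderiv0 (g : R -> R) (l : R) : Prop :=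
  filterlim (fun e => (g e - g 0) / e) (at_right 0) (locally l).
Definition rderiv0 (g : R -> R) : R := epsilon (inhabits 0) (has_rderiv0 g).

Definition Lap (mu : V -> R -> V -> R) (K : V -> list V) (f : V -> R) (z : V) : R :=
  lsum (K z) (fun w => if Vdec w z then 0 else (f w - f z) * rderiv0 (fun e => mu z e w)).

Definition Kxy (K : V -> list V) (x y : V) : list V := K x ++ K y.

(* couplings of m1, m2 supported in the finite set S (containing both supports) *)
Definition coupling (S : list V) (m1 m2 : V -> R) (pi : V -> V -> R) : Prop :=
  (forall u v, In u S -> In v S -> 0 <= pi u v) /\
  (forall u, In u S -> lsum S (fun v => pi u v) = m1 u) /\
  (forall v, In v S -> lsum S (fun u => pi u v) = m2 v).

Definition W1 (d : V -> V -> R) (S : list V) (m1 m2 : V -> R) : R :=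
  real (Glb_Rbar (fun c => exists pi, coupling S m1 m2 pi /\
                   c = lsum S (fun u => lsum S (fun v => pi u v * d u v)))).

Definition Ric_eps (d : V -> V -> R) (mu : V -> R -> V -> R) (K : V -> list V)
  (eps : R) (x y : V) : R :=
  1 - W1 d (Kxy K x y) (mu x eps) (mu y eps) / d x y.

Definition grad (d : V -> V -> R) (x y : V) (f : V -> R) : R := (f y - f x) / d x y.

End Defs.
Arguments Vdec {V}. Arguments lsum {V}. Arguments is_metric {V}. Arguments complete_metric {V}.
Arguments locally_finite_graph {V}. Arguments local_random_walk {V}. Arguments time_analytic {V}.
Arguments Lap {V}. Arguments Kxy {V}. Arguments coupling {V}. Arguments W1 {V}. Arguments Ric_eps {V}. Arguments grad {V}.

(* Main.v *)
Require Import Defs.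
From Coquelicot Require Import Coquelicot.
From Stdlib Require Import Reals List Lra Lia Permutation ClassicalEpsilon Classical.
From Stdlib Require FinFun.
Open Scope R_scope.

Definition sumL {A : Type} (l : list A) (F : A -> R) : R :=
  fold_right (fun a acc => F a + acc) 0 l.

Lemma sumL_nil {A} (F : A -> R) : sumL nil F = 0.
Proof. reflexivity. Qed.
Lemma sumL_cons {A} (a : A) l F : sumL (a :: l) F = F a + sumL l F.
Proof. reflexivity. Qed.

Lemma sumL_ext {A} (l : list A) F G : (forall a, In a l -> F a = G a) -> sumL l F = sumL l G.
Proof.
  induction l as [|a l IH]; intros H; simpl; auto.
  rewrite (H a (or_introl eq_refl)), IH; auto. intros b Hb; apply H; right; auto.
Qed.

Lemma sumL_plus {A} (l : list A) F G : sumL l (fun a => F a + G a) = sumL l F + sumL l G.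
Proof. induction l; simpl; [lra|rewrite IHl; lra]. Qed.
Lemma sumL_minus {A} (l : list A) F G : sumL l (fun a => F a - G a) = sumL l F - sumL l G.
Proof. induction l; simpl; [lra|rewrite IHl; lra]. Qed.
Lemma sumL_scal {A} (l : list A) c F : sumL l (fun a => c * F a) = c * sumL l F.
Proof. induction l; simpl; [lra|rewrite IHl; lra]. Qed.
Lemma sumL_scal_r {A} (l : list A) c F : sumL l (fun a => F a * c) = sumL l F * c.
Proof. induction l; simpl; [lra|rewrite IHl; lra]. Qed.
Lemma sumL_zero {A} (l : list A) F : (forall a, In a l -> F a = 0) -> sumL l F = 0.
Proof. intros H; rewrite (sumL_ext l F (fun _ => 0)); auto. clear H. induction l; simpl; auto; rewrite IHl; lra. Qed.
Lemma sumL_le {A} (l : list A) F G : (forall a, In a l -> F a <= G a) -> sumL l F <= sumL l G.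
Proof.
  induction l as [|a l IH]; intros H; simpl; [lra|].
  assert (F a <= G a) by (apply H; left; auto).
  assert (sumL l F <= sumL l G) by (apply IH; intros; apply H; right; auto). lra.
Qed.
Lemma sumL_nonneg {A} (l : list A) F : (forall a, In a l -> 0 <= F a) -> 0 <= sumL l F.
Proof. intros H. pose proof (sumL_le l (fun _ => 0) F H). rewrite sumL_zero in H0; auto. Qed.
Lemma sumL_abs {A} (l : list A) F : Rabs (sumL l F) <= sumL l (fun a => Rabs (F a)).
Proof.
  induction l; simpl. rewrite Rabs_R0; lra.
  eapply Rle_trans; [apply Rabs_triang|]. lra.
Qed.
Lemma sumL_app {A} (l1 l2 : list A) F : sumL (l1 ++ l2) F = sumL l1 F + sumL l2 F.
Proof. induction l1; simpl; [lra|rewrite IHl1; lra]. Qed.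
Lemma sumL_map {A B} (f : A -> B) l F : sumL (map f l) F = sumL l (fun a => F (f a)).
Proof. induction l; simpl; auto; rewrite IHl; auto. Qed.
Lemma sumL_swap {A B} (l1 : list A) (l2 : list B) F :
  sumL l1 (fun a => sumL l2 (fun b => F a b)) = sumL l2 (fun b => sumL l1 (fun a => F a b)).
Proof.
  induction l1; simpl. rewrite sumL_zero; auto.
  rewrite IHl1, <- sumL_plus; auto.
Qed.
Lemma sumL_perm {A} (l l' : list A) F : Permutation l l' -> sumL l F = sumL l' F.
Proof. induction 1; simpl; auto; try lra. Qed.
Lemma sumL_prod {A B} (l1 : list A) (l2 : list B) F :
  sumL (list_prod l1 l2) F = sumL l1 (fun a => sumL l2 (fun b => F (a, b))).
Proof. induction l1; simpl; auto. rewrite sumL_app, sumL_map, IHl1; auto. Qed.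
Lemma sumL_single {A} (l : list A) F a : In a l -> (forall b, In b l -> 0 <= F b) -> F a <= sumL l F.
Proof.
  induction l; simpl; intros Ha H. destruct Ha.
  destruct Ha as [->|Ha].
  - assert (0 <= sumL l F) by (apply sumL_nonneg; auto). lra.
  - assert (0 <= F a0) by auto. assert (F a <= sumL l F) by auto. lra.
Qed.

Section WithV.
Variable V : Type.
Lemma lsum_sumL (l : list V) F : lsum l F = sumL (nodup Vdec l) F.
Proof. unfold lsum. induction (nodup Vdec l); simpl; auto; rewrite IHl0; auto. Qed.

Lemma sumL_delta (l : list V) (u : V) F : NoDup l -> In u l ->
  sumL l (fun w => if Vdec w u then F w else 0) = F u.
Proof.
  induction l as [|a l IH]; intros Hn Hu; simpl. destruct Hu.
  inversion Hn; subst.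
  destruct (Vdec a u) as [->|Hne].
  - rewrite sumL_zero; [lra|]. intros b Hb. destruct (Vdec b u); auto. subst; contradiction.
  - rewrite IH; auto; [lra|]. destruct Hu; auto. congruence.
Qed.
Lemma sumL_delta' (l : list V) (u : V) F : NoDup l -> In u l ->
  sumL l (fun w => if Vdec u w then F w else 0) = F u.
Proof.
  intros; rewrite <- (sumL_delta l u F); auto. apply sumL_ext; intros.
  destruct (Vdec u a), (Vdec a u); subst; auto; congruence.
Qed.

Lemma sumL_subset (B A : list V) F : NoDup A -> NoDup B -> (forall a, In a A -> In a B) ->
  (forall b, In b B -> ~ In b A -> F b = 0) -> sumL B F = sumL A F.
Proof.
  revert A; induction B as [|b B IH]; intros A HA HB Hinc H0.
  - destruct A as [|a A]; auto. exfalso; apply (Hinc a); left; auto.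
  - inversion HB; subst.
    destruct (in_dec Vdec b A) as [Hb|Hb].
    + destruct (in_split _ _ Hb) as (A1 & A2 & ->).
      rewrite (sumL_perm (A1 ++ b :: A2) (b :: A1 ++ A2)) by (symmetry; apply Permutation_middle).
      simpl. f_equal. apply IH; auto.
      * apply NoDup_remove_1 with b; auto.
      * intros a Ha. assert (In a (b :: B)) as [->|?]. { apply Hinc. apply in_app_or in Ha; apply in_or_app; simpl; tauto. }
        -- exfalso. apply (NoDup_remove_2 _ _ _ HA); auto.
        -- auto.
      * intros c Hc Hn. apply H0; [right; auto|]. intro Hc'. apply in_app_or in Hc'. destruct Hc' as [?|[->|?]]; auto.
        apply Hn; apply in_or_app; auto. apply Hn; apply in_or_app; auto.
    + simpl. rewrite (H0 b (or_introl eq_refl) Hb). rewrite (IH A); auto; [lra| |].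
      * intros a Ha. destruct (Hinc a Ha) as [->|?]; auto; contradiction.
      * intros c Hc Hn; apply H0; auto; right; auto.
Qed.
End WithV.


Section Farkas.
Variables (I J : Type) (idx : list I).

Definition dot (y a : I -> R) : R := sumL idx (fun i => y i * a i).

Lemma dot_lin_r y a b al be : dot y (fun i => al * a i - be * b i) = al * dot y a - be * dot y b.
Proof.
  unfold dot. rewrite <- !sumL_scal, <- sumL_minus. apply sumL_ext; intros; ring.
Qed.
Lemma dot_lin_l y z a al be : dot (fun i => al * y i - be * z i) a = al * dot y a - be * dot z a.
Proof.
  unfold dot. rewrite <- !sumL_scal, <- sumL_minus. apply sumL_ext; intros; ring.
Qed.

Definition cone (L : list J) (A : J -> I -> R) (b : I -> R) : Prop :=
  exists lam : J -> R, (forall j, In j L -> 0 <= lam j) /\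
    forall i, In i idx -> b i = sumL L (fun j => lam j * A j i).
Definition sep (L : list J) (A : J -> I -> R) (b : I -> R) : Prop :=
  exists y : I -> R, (forall j, In j L -> 0 <= dot y (A j)) /\ dot y b < 0.

Lemma farkas (L : list J) : NoDup L -> forall A b, cone L A b \/ sep L A b.
Proof.
  induction L as [|j0 L IH]; intros HN A b.
  - destruct (classic (forall i, In i idx -> b i = 0)) as [H|H].
    + left. exists (fun _ => 0). split; [intros j []|]. intros i Hi; rewrite H; auto.
    + right. exists (fun i => - b i). split; [intros j []|].
      apply not_all_ex_not in H. destruct H as [i0 Hi0].
      apply imply_to_and in Hi0. destruct Hi0 as [Hin Hne].
      unfold dot.
      assert (b i0 * b i0 <= sumL idx (fun i => b i * b i)).
      { apply (sumL_single idx (fun i => b i * b i) i0); auto. intros; nra. }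
      assert (0 < b i0 * b i0) by (assert (b i0 < 0 \/ 0 < b i0) as [|] by lra; nra).
      rewrite (sumL_ext _ _ (fun i => -1 * (b i * b i))) by (intros; ring).
      rewrite sumL_scal. lra.
  - inversion HN as [|? ? Hj0 HN']; subst.
    destruct (IH HN' A b) as [[lam [Hl Hb]]|[y [Hy Hyb]]].
    + left. exists (fun j => if excluded_middle_informative (j = j0) then 0 else lam j).
      split.
      * intros j Hj. destruct (excluded_middle_informative (j = j0)); [lra|]. apply Hl.
        destruct Hj; auto. congruence.
      * intros i Hi. simpl. destruct (excluded_middle_informative (j0 = j0)); [|congruence].
        rewrite Hb; auto. rewrite Rmult_0_l, Rplus_0_l. apply sumL_ext.
        intros j Hj. destruct (excluded_middle_informative (j = j0)); auto. subst; contradiction.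
    + destruct (Rle_lt_dec 0 (dot y (A j0))) as [Hya|Hya].
      { right. exists y. split; auto. intros j [<-|Hj]; auto. }
      set (ya := dot y (A j0)) in *.
      set (A' := fun j i => ya * A j i - dot y (A j) * A j0 i).
      set (b' := fun i => ya * b i - dot y b * A j0 i).
      destruct (IH HN' A' b') as [[lam [Hl Hb]]|[z [Hz Hzb]]].
      * left.
        set (S2 := sumL L (fun j => lam j * dot y (A j))).
        assert (HS2 : 0 <= S2).
        { apply sumL_nonneg. intros j Hj. apply Rmult_le_pos; auto. }
        set (c := (dot y b - S2) / ya).
        assert (Hc : 0 <= c).
        { unfold c, Rdiv. assert (/ ya < 0) by (apply Rinv_lt_0_compat; auto).
          assert (dot y b - S2 < 0) by lra. nra. }
        exists (fun j => if excluded_middle_informative (j = j0) then c else lam j).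
        split.
        -- intros j Hj. destruct (excluded_middle_informative (j = j0)); auto. apply Hl.
           destruct Hj; auto. congruence.
        -- intros i Hi. simpl. destruct (excluded_middle_informative (j0 = j0)); [|congruence].
           rewrite (sumL_ext L _ (fun j => lam j * A j i)).
           2:{ intros j Hj. destruct (excluded_middle_informative (j = j0)); auto. subst; contradiction. }
           specialize (Hb i Hi). unfold b', A' in Hb.
           rewrite (sumL_ext L _ (fun j => ya * (lam j * A j i) - A j0 i * (lam j * dot y (A j)))) in Hb
             by (intros; ring).
           rewrite sumL_minus, sumL_scal, sumL_scal in Hb. fold S2 in Hb.
           unfold c. field_simplify_eq; [|lra]. lra.
      * right. exists (fun i => ya * z i - dot z (A j0) * y i). split.
        -- intros j [<-|Hj].
           ++ rewrite dot_lin_l. fold ya. lra.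
           ++ rewrite dot_lin_l. specialize (Hz j Hj). unfold A' in Hz. rewrite dot_lin_r in Hz. lra.
        -- rewrite dot_lin_l. unfold b' in Hzb. rewrite dot_lin_r in Hzb. lra.
Qed.
End Farkas.


Lemma NoDup_prod {A B} (l1 : list A) (l2 : list B) : NoDup l1 -> NoDup l2 -> NoDup (list_prod l1 l2).
Proof.
  induction l1 as [|a l1 IH]; intros H1 H2; simpl. constructor.
  inversion H1; subst. apply NoDup_app; auto.
  - apply FinFun.Injective_map_NoDup; auto. intros u v E; inversion E; auto.
  - intros p Hp Hp'. apply in_map_iff in Hp. destruct Hp as [b [<- _]].
    apply in_prod_iff in Hp'. tauto.
Qed.

Lemma Rmin_lip a b a' b' k : Rabs (a - a') <= k -> Rabs (b - b') <= k -> Rabs (Rmin a b - Rmin a' b') <= k.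
Proof.
  intros H1 H2. apply Rabs_le_between in H1. apply Rabs_le_between in H2. apply Rabs_le.
  unfold Rmin; destruct (Rle_dec a b), (Rle_dec a' b'); lra.
Qed.

Lemma fold_min_le {A} (l : list A) (F : A -> R) M u : In u l ->
  fold_right (fun a acc => Rmin (F a) acc) M l <= F u.
Proof.
  induction l as [|a l IH]; simpl; intros Hu. destruct Hu.
  destruct Hu as [->|Hu]. apply Rmin_l. eapply Rle_trans; [apply Rmin_r|auto].
Qed.
Lemma fold_min_ge {A} (l : list A) (F : A -> R) M c : (forall u, In u l -> c <= F u) -> c <= M ->
  c <= fold_right (fun a acc => Rmin (F a) acc) M l.
Proof.
  induction l as [|a l IH]; simpl; intros H HM; auto.
  apply Rmin_glb. apply H; left; auto. apply IH; auto; intros; apply H; right; auto.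
Qed.
Lemma fold_min_lip {A} (l : list A) (F G : A -> R) M k : 0 <= k -> (forall u, Rabs (F u - G u) <= k) ->
  Rabs (fold_right (fun a acc => Rmin (F a) acc) M l - fold_right (fun a acc => Rmin (G a) acc) M l) <= k.
Proof.
  induction l as [|a l IH]; simpl; intros Hk H. rewrite Rminus_eq_0, Rabs_R0; auto.
  apply Rmin_lip; auto.
Qed.

Lemma duality (V : Type) (d : V -> V -> R) (Hd : is_metric d) (S : list V) (HS : NoDup S)
  (mu nu : V -> R) (Hmu : forall u, In u S -> 0 <= mu u) (Hnu : forall u, In u S -> 0 <= nu u)
  (Hsm : sumL S mu = 1) (Hsn : sumL S nu = 1) (c0 : R)
  (Hc : forall h : V -> R, (forall u v, In u S -> In v S -> Rabs (h u - h v) <= d u v) ->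
        sumL S (fun w => h w * (nu w - mu w)) <= c0) :
  exists pi : V -> V -> R, (forall u v, In u S -> In v S -> 0 <= pi u v) /\
    (forall u, In u S -> sumL S (fun v => pi u v) = mu u) /\
    (forall v, In v S -> sumL S (fun u => pi u v) = nu v) /\
    sumL S (fun u => sumL S (fun v => pi u v * d u v)) <= c0.
Proof.
  destruct Hd as (Hd0 & Hdeq & Hdsym & Hdtri).
  set (idx := None :: map (fun u => Some (@inl V V u)) S ++ map (fun v => Some (@inr V V v)) S).
  set (L := None :: map Some (list_prod S S)).
  set (A := fun (j : option (V * V)) (i : option (V + V)) =>
    match j with
    | None => match i with None => 1 | _ => 0 end
    | Some (u, v) => match i with
                     | None => d u v
                     | Some (inl w) => if Vdec w u then 1 else 0
                     | Some (inr w) => if Vdec w v then 1 else 0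
                     end
    end).
  set (b := fun i : option (V + V) => match i with None => c0 | Some (inl w) => mu w | Some (inr w) => nu w end).
  assert (HL : NoDup L).
  { constructor. intro H. apply in_map_iff in H. destruct H as [? [H _]]; discriminate.
    apply FinFun.Injective_map_NoDup. intros p q E; inversion E; auto. apply NoDup_prod; auto. }
  assert (Hdot : forall y a, dot _ idx y a = y None * a None +
     sumL S (fun u => y (Some (inl u)) * a (Some (inl u))) + sumL S (fun v => y (Some (inr v)) * a (Some (inr v)))).
  { intros y a. unfold dot, idx. simpl. rewrite sumL_app, !sumL_map. lra. }
  destruct (farkas _ _ idx L HL A b) as [[lam [Hl Hb]]|[y [Hy Hyb]]].
  - exists (fun u v => lam (Some (u, v))).
    assert (HsL : forall i, sumL L (fun j => lam j * A j i) = lam None * A None i +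
        sumL S (fun u => sumL S (fun v => lam (Some (u, v)) * A (Some (u, v)) i))).
    { intros i. unfold L. simpl. rewrite sumL_map, sumL_prod. reflexivity. }
    split; [|split; [|split]].
    + intros u v Hu Hv. apply Hl. right. apply in_map. apply in_prod; auto.
    + intros u Hu. assert (Hi : In (Some (inl u)) idx).
      { right. apply in_or_app. left. apply in_map_iff; exists u; auto. }
      specialize (Hb _ Hi). rewrite HsL in Hb. simpl in Hb. rewrite Hb.
      rewrite (sumL_ext S (fun u0 => sumL S (fun v => lam (Some (u0, v)) * (if Vdec u u0 then 1 else 0)))
        (fun u' => if Vdec u u' then sumL S (fun v => lam (Some (u', v))) else 0)).
      2:{ intros u' _. destruct (Vdec u u') as [<-|Hne]. apply sumL_ext; intros v _; ring.
          apply sumL_zero; intros v _; ring. }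
      rewrite sumL_delta'; auto. ring.
    + intros v Hv. assert (Hi : In (Some (inr v)) idx).
      { right. apply in_or_app. right. apply in_map_iff; exists v; auto. }
      specialize (Hb _ Hi). rewrite HsL in Hb. simpl in Hb. rewrite Hb.
      rewrite (sumL_ext S (fun u0 => sumL S (fun v0 => lam (Some (u0, v0)) * (if Vdec v v0 then 1 else 0)))
        (fun u => lam (Some (u, v)))).
      2:{ intros u _. rewrite (sumL_ext S _ (fun v' => if Vdec v v' then lam (Some (u, v')) else 0)).
          apply sumL_delta'; auto. intros v' _. destruct (Vdec v v'), (Vdec v' v); subst; try congruence; ring. }
      ring.
    + assert (Hi : In (@None (V + V)) idx) by (left; auto).
      specialize (Hb _ Hi). rewrite HsL in Hb. simpl in Hb.
      assert (0 <= lam None) by (apply Hl; left; auto). lra.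
  - exfalso.
    set (t := y None). set (f := fun u => y (Some (inl u))). set (g := fun v => y (Some (inr v))).
    assert (Ht : 0 <= t).
    { pose proof (Hy None (or_introl eq_refl)) as H. rewrite Hdot in H. simpl in H.
      rewrite !sumL_zero in H by (intros; ring). fold t in H. lra. }
    assert (Hfg : forall u v, In u S -> In v S -> 0 <= t * d u v + f u + g v).
    { intros u v Hu Hv. assert (In (Some (u, v)) L) by (right; apply in_map; apply in_prod; auto).
      pose proof (Hy _ H) as H'. rewrite Hdot in H'. simpl in H'.
      rewrite (sumL_ext S (fun w => y (Some (inl w)) * (if Vdec w u then 1 else 0)) (fun w => if Vdec w u then f w else 0)) in H'
        by (intros w _; unfold f; destruct (Vdec w u); ring).
      rewrite (sumL_ext S (fun w => y (Some (inr w)) * (if Vdec w v then 1 else 0)) (fun w => if Vdec w v then g w else 0)) in H'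
        by (intros w _; unfold g; destruct (Vdec w v); ring).
      rewrite !sumL_delta in H'; auto. }
    rewrite Hdot in Hyb. simpl in Hyb. fold t in Hyb.
    change (t * c0 + sumL S (fun u => f u * mu u) + sumL S (fun v => g v * nu v) < 0) in Hyb.
    destruct Ht as [Ht|Ht0].
    + set (M := sumL S (fun v => Rabs (g v / t))).
      set (h := fun v => fold_right (fun u acc => Rmin (d u v + f u / t) acc) M S).
      assert (Hh1 : forall u v, In u S -> h v <= d u v + f u / t).
      { intros u v Hu. unfold h. apply (fold_min_le S (fun u => d u v + f u / t)); auto. }
      assert (Hh2 : forall v, In v S -> - g v / t <= h v).
      { intros v Hv. unfold h.
        assert (HM : - g v / t <= M).
        { unfold M. eapply Rle_trans; [|apply (sumL_single S (fun v => Rabs (g v / t)) v); auto; intros; apply Rabs_pos].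
          unfold Rdiv. rewrite Ropp_mult_distr_l_reverse. rewrite <- Rabs_Ropp. apply Rle_abs. }
        apply fold_min_ge; auto.
        intros u Hu. specialize (Hfg u v Hu Hv).
        apply Rmult_le_reg_l with t; auto. field_simplify; try lra. }
      assert (Hlip : forall u v, In u S -> In v S -> Rabs (h u - h v) <= d u v).
      { intros u v _ _. unfold h. apply fold_min_lip; auto. intros a. apply Rabs_le.
        pose proof (Hdtri a u v). pose proof (Hdtri a v u). rewrite (Hdsym v u) in H0. lra. }
      specialize (Hc h Hlip).
      assert (sumL S (fun w => h w * (nu w - mu w)) >= - (sumL S (fun u => f u * mu u) + sumL S (fun v => g v * nu v)) / t).
      { rewrite (sumL_ext S _ (fun w => h w * nu w - h w * mu w)) by (intros; ring).
        rewrite sumL_minus.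
        assert (sumL S (fun v => (- g v / t) * nu v) <= sumL S (fun w => h w * nu w)).
        { apply sumL_le. intros v Hv. apply Rmult_le_compat_r; auto. }
        assert (sumL S (fun w => h w * mu w) <= sumL S (fun u => (f u / t) * mu u)).
        { apply sumL_le. intros u Hu. apply Rmult_le_compat_r; auto.
          specialize (Hh1 u u Hu). rewrite (proj2 (Hdeq u u) eq_refl) in Hh1. lra. }
        rewrite (sumL_ext S (fun v => - g v / t * nu v) (fun v => (-/t) * (g v * nu v))) in H by (intros; field; lra).
        rewrite (sumL_ext S (fun u => f u / t * mu u) (fun u => (/t) * (f u * mu u))) in H0 by (intros; field; lra).
        rewrite sumL_scal in H, H0. unfold Rdiv. 
        assert (-(sumL S (fun u => f u * mu u) + sumL S (fun v => g v * nu v)) * / t =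
                - / t * sumL S (fun v => g v * nu v) - / t * sumL S (fun u => f u * mu u)) by ring.
        lra. }
      assert (c0 < - (sumL S (fun u => f u * mu u) + sumL S (fun v => g v * nu v)) / t).
      { apply Rmult_lt_reg_l with t; auto. field_simplify; lra. }
      lra.
    + assert (0 <= sumL S (fun u => f u * mu u) + sumL S (fun v => g v * nu v)).
      { assert (E : sumL S (fun u => f u * mu u) + sumL S (fun v => g v * nu v) =
          sumL S (fun u => sumL S (fun v => (f u + g v) * (mu u * nu v)))).
        { rewrite (sumL_ext S (fun u => sumL S _) (fun u => f u * mu u * sumL S nu + mu u * sumL S (fun v => g v * nu v))).
          rewrite sumL_plus, sumL_scal_r, Hsn, (sumL_ext S (fun u => mu u * _) (fun u => sumL S (fun v => g v * nu v) * mu u)), sumL_scal, Hsm by (intros; ring). ring.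
          intros u _. rewrite <- sumL_scal, <- sumL_scal. rewrite <- sumL_plus. apply sumL_ext; intros; ring. }
        rewrite E. apply sumL_nonneg. intros u Hu. apply sumL_nonneg. intros v Hv.
        specialize (Hfg u v Hu Hv). rewrite <- Ht0 in Hfg. apply Rmult_le_pos; [lra|]. apply Rmult_le_pos; auto. }
      rewrite <- Ht0 in Hyb. lra.
Qed.


Lemma ev_point (P : R -> Prop) : at_right 0 P -> exists e, 0 < e /\ e <= 1 /\ P e.
Proof.
  intros [eps H]. exists (Rmin (eps / 2) 1).
  assert (0 < Rmin (eps/2) 1) by (apply Rmin_glb_lt; [destruct eps; simpl; lra|lra]).
  split; [auto|split; [apply Rmin_r|]]. apply H; auto.
  change (Rabs (Rmin (eps / 2) 1 - 0) < eps). rewrite Rminus_0_r, Rabs_pos_eq by lra.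
  eapply Rle_lt_trans; [apply Rmin_l|]. destruct eps; simpl; lra.
Qed.

Lemma ev_small (c : R) : 0 < c -> at_right 0 (fun e => 0 < e /\ e < c).
Proof.
  intros Hc. exists (mkposreal c Hc). intros e He He0. split; auto.
  change (Rabs (e - 0) < c) in He. rewrite Rminus_0_r, Rabs_pos_eq in He; lra.
Qed.

Definition Small (G : R -> R) : Prop := forall eta, 0 < eta -> at_right 0 (fun e => Rabs (G e) < eta).

Lemma rderiv_small g l : has_rderiv0 g l -> Small (fun e => (g e - g 0) / e - l).
Proof.
  intros H eta Heta. apply filterlim_locally with (eps := mkposreal eta Heta) in H.
  eapply filter_imp; [|exact H]. intros e He. exact He.
Qed.

Lemma small_zero (a : R) (C : R) : (forall eta, 0 < eta -> Rabs a <= eta * C) -> a = 0.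
Proof.
  intros H. destruct (Req_dec a 0) as [|Hne]; auto. exfalso.
  assert (Ha : 0 < Rabs a) by (apply Rabs_pos_lt; auto).
  assert (HC : 0 <= C). { specialize (H 1 Rlt_0_1). lra. }
  specialize (H (Rabs a / (2 * (C + 1))) ltac:(apply Rdiv_lt_0_compat; lra)).
  assert (Rabs a / (2 * (C + 1)) * C < Rabs a).
  { unfold Rdiv. rewrite Rmult_assoc. rewrite <- (Rmult_1_r (Rabs a)) at 2. apply Rmult_lt_compat_l; auto.
    apply Rmult_lt_reg_l with (2 * (C + 1)); [lra|]. field_simplify; lra. }
  lra.
Qed.

Lemma small_sum {A} (l : list A) (G : A -> R -> R) : (forall w, In w l -> Small (G w)) ->
  Small (fun e => sumL l (fun w => Rabs (G w e))).
Proof.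
  induction l as [|a l IH]; intros H eta Heta; simpl.
  - exists (mkposreal 1 Rlt_0_1). intros. rewrite Rabs_R0; auto.
  - assert (H1 := H a (or_introl eq_refl) (eta / 2) ltac:(lra)).
    assert (H2 := IH (fun w Hw => H w (or_intror Hw)) (eta / 2) ltac:(lra)).
    eapply filter_imp; [|exact (filter_and _ _ H1 H2)]. intros e [E1 E2]. simpl in E2.
    assert (0 <= sumL l (fun w => Rabs (G w e))) by (apply sumL_nonneg; intros; apply Rabs_pos).
    rewrite Rabs_pos_eq in E2 |- *; try lra. pose proof (Rabs_pos (G a e)); lra.
Qed.

Lemma small_le (G H : R -> R) : Small G -> (forall e, 0 < e -> Rabs (H e) <= Rabs (G e)) -> Small H.
Proof.
  intros HG Hle eta Heta. eapply filter_imp; [|exact (filter_and _ _ (HG eta Heta) (ev_small 1 Rlt_0_1))].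
  intros e [E1 [E2 _]]. specialize (Hle e E2). lra.
Qed.

Lemma small_lin (G1 G2 : R -> R) c : Small G1 -> Small G2 -> Small (fun e => c * (G1 e - G2 e)).
Proof.
  intros H1 H2 eta Heta.
  set (k := eta / (2 * (Rabs c + 1))).
  assert (Hk : 0 < k) by (apply Rdiv_lt_0_compat; [lra|]; pose proof (Rabs_pos c); lra).
  eapply filter_imp; [|exact (filter_and _ _ (H1 k Hk) (H2 k Hk))]. intros e [E1 E2].
  rewrite Rabs_mult. 
  assert (Rabs (G1 e - G2 e) <= Rabs (G1 e) + Rabs (G2 e)).
  { unfold Rminus. eapply Rle_trans; [apply Rabs_triang|]. rewrite Rabs_Ropp; lra. }
  assert (Rabs c * Rabs (G1 e - G2 e) <= Rabs c * (2 * k)).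
  { apply Rmult_le_compat_l; [apply Rabs_pos|lra]. }
  assert (Rabs c * (2 * k) < eta).
  { unfold k. pose proof (Rabs_pos c). apply Rmult_lt_reg_r with (Rabs c + 1); [lra|].
    field_simplify; lra. }
  lra.
Qed.

Lemma seq_bounded (u : nat -> R) : is_lim_seq u 0 -> exists M, forall n, Rabs (u n) <= M.
Proof.
  intros H. apply is_lim_seq_spec in H. destruct (H (mkposreal 1 Rlt_0_1)) as [N HN].
  assert (Hfin : forall N, exists M, forall n, (n < N)%nat -> Rabs (u n) <= M).
  { induction N0 as [|N0 [M HM]]. exists 0; intros; lia.
    exists (Rmax M (Rabs (u N0))). intros n Hn.
    destruct (Nat.eq_dec n N0) as [->|Hne]. apply Rmax_r.
    eapply Rle_trans; [apply HM; lia|apply Rmax_l]. }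
  destruct (Hfin N) as [M HM]. exists (Rmax M 1). intros n.
  destruct (Nat.lt_ge_cases n N) as [Hn|Hn].
  eapply Rle_trans; [apply HM; auto|apply Rmax_l].
  specialize (HN n Hn). simpl in HN. rewrite Rminus_0_r in HN. eapply Rle_trans; [left; exact HN|apply Rmax_r].
Qed.

Lemma rderiv_exists (f g : R -> R) (delta : R) : 0 < delta ->
  (forall e, 0 <= e <= 1 -> g e = f e) -> analytic_on g (- delta) (1 + delta) ->
  exists l, has_rderiv0 f l.
Proof.
  intros Hd Hgf Han. destruct (Han 0 ltac:(lra)) as [c [r [Hr Hser]]].
  assert (Hps : forall s, Rabs s < r -> PSeries c s = g s).
  { intros s Hs. apply is_pseries_unique. rewrite <- (Rminus_0_r s) at 1. apply Hser. rewrite Rminus_0_r; auto. }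
  assert (HCV : Rbar_lt (Rabs 0) (CV_radius c)).
  { set (s0 := r / 2).
    assert (Hs0 : is_pseries c s0 (g s0)).
    { rewrite <- (Rminus_0_r s0) at 1. apply Hser. unfold s0. rewrite Rminus_0_r, Rabs_pos_eq; lra. }
    assert (Hex : ex_series (fun k => scal (pow_n s0 k) (c k))) by (eexists; exact Hs0).
    apply ex_series_lim_0 in Hex. apply seq_bounded in Hex. destruct Hex as [M HM].
    assert (HE : Rbar_le s0 (CV_radius c)).
    { destruct (CV_radius_bounded c) as [Hub _]. apply Hub. exists M. intros n.
      specialize (HM n). rewrite Rmult_comm. rewrite <- pow_n_pow. exact HM. }
    rewrite Rabs_R0. eapply Rbar_lt_le_trans; [|exact HE]. simpl. unfold s0; lra. }
  pose proof (is_derive_PSeries c 0 HCV) as HD. apply is_derive_Reals in HD.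
  exists (PSeries (PS_derive c) 0). apply filterlim_locally. intros eps.
  destruct (HD eps (cond_pos eps)) as [del Hdel].
  assert (Hm : 0 < Rmin del (Rmin r 1)) by (apply Rmin_glb_lt; [apply cond_pos|apply Rmin_glb_lt; lra]).
  exists (mkposreal _ Hm). intros e He He0. simpl in He. change (Rabs (e - 0) < Rmin del (Rmin r 1)) in He.
  rewrite Rminus_0_r in He. rewrite Rabs_pos_eq in He by lra.
  assert (e < del) by (eapply Rlt_le_trans; [exact He|apply Rmin_l]).
  assert (e < r) by (eapply Rlt_le_trans; [exact He|eapply Rle_trans; [apply Rmin_r|apply Rmin_l]]).
  assert (e < 1) by (eapply Rlt_le_trans; [exact He|eapply Rle_trans; [apply Rmin_r|apply Rmin_r]]).
  specialize (Hdel e ltac:(lra) ltac:(rewrite Rabs_pos_eq; lra)).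
  change (Rabs ((f e - f 0) / e - PSeries (PS_derive c) 0) < eps).
  rewrite <- (Hgf e) by lra. rewrite <- (Hgf 0) by lra.
  rewrite <- (Hps e) by (rewrite Rabs_pos_eq; lra). rewrite <- (Hps 0) by (rewrite Rabs_R0; lra).
  rewrite Rplus_0_l in Hdel. exact Hdel.
Qed.


Lemma glb_finite (E : R -> Prop) c m : E c -> (forall c', E c' -> m <= c') ->
  exists k, Glb_Rbar E = Finite k.
Proof.
  intros Hc Hm. pose proof (Glb_Rbar_correct E) as [Hlb Hgl].
  specialize (Hlb c Hc). assert (Hm' : Rbar_le m (Glb_Rbar E)) by (apply Hgl; intros z Hz; apply Hm; auto).
  destruct (Glb_Rbar E) as [k| |]; simpl in *; try contradiction. exists k; auto.
Qed.

Lemma W1_bounds (E : R -> Prop) c1 c0 L : E c1 -> c1 <= c0 -> (forall c, E c -> L <= c) ->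
  L <= real (Glb_Rbar E) <= c0.
Proof.
  intros Hc1 Hle HL. destruct (glb_finite E c1 L Hc1 HL) as [k Hk].
  pose proof (Glb_Rbar_correct E) as [Hlb Hgl]. rewrite Hk in *. simpl.
  specialize (Hlb c1 Hc1). assert (Hm' : Rbar_le L k) by (apply Hgl; intros z Hz; apply HL; auto).
  simpl in *. lra.
Qed.

Theorem mainTheorem12 (V : Type) (E : V -> V -> Prop) (d : V -> V -> R)
  (mu : V -> R -> V -> R) (K : V -> list V) :
  locally_finite_graph E -> is_metric d -> complete_metric d ->
  local_random_walk mu K -> time_analytic mu ->
  forall x y : V, x <> y ->
  exists ric : R,
    filterlim (fun eps => Ric_eps d mu K eps x y / eps) (at_right 0) (locally ric) /\
    is_glb_Rbar
      (fun c => exists f : V -> R,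
         (forall u v, In u (Kxy K x y) -> In v (Kxy K x y) -> Rabs (f u - f v) <= d u v) /\
         grad d x y f = 1 /\
         c = grad d y x (Lap mu K f))
      ric.
Proof.
  intros _ Hd _ Hrw Hta x y Hxy.
  destruct Hrw as (Hnn & Hsupp & Hsum1 & Hmu0 & _).
  pose proof Hd as (Hd0 & Hdeq & Hdsym & Hdtri).
  set (S0 := Kxy K x y). set (S := nodup Vdec S0).
  assert (HS : NoDup S) by apply NoDup_nodup.
  assert (HinS : forall w, In w S <-> In w S0) by (intros; apply nodup_In).
  pose (q := fun z w => rderiv0 (fun e => mu z e w)).
  assert (Hq : forall z w, has_rderiv0 (fun e => mu z e w) (q z w)).
  { intros z w. destruct (Hta z w) as [dl [Hdl [g [Hg Han]]]].
    destruct (rderiv_exists _ g dl Hdl Hg Han) as [l Hl].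
    unfold q, rderiv0. apply epsilon_spec. exists l; auto. }
  assert (HKz : forall z, In z (K z)).
  { intros z. apply (Hsupp z 0 z). lra. rewrite Hmu0. destruct (Vdec z z); [lra|congruence]. }
  pose (R0 := fun z e w => (mu z e w - mu z 0 w) / e - q z w).
  assert (HR : forall z w, Small (fun e => R0 z e w)).
  { intros z w. apply rderiv_small. apply Hq. }
  assert (Hout : forall z e w, 0 <= e <= 1 -> ~ In w (K z) -> mu z e w = 0).
  { intros z e w He Hw. destruct (Req_dec (mu z e w) 0); auto. exfalso; apply Hw; apply (Hsupp z e w); auto. }
  assert (Q0 : forall z w, ~ In w (K z) -> q z w = 0).
  { intros z w Hw. apply small_zero with (C := 1). intros eta Heta.
    destruct (ev_point _ (HR z w eta Heta)) as [e [He0 [He1 Hlt]]].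
    unfold R0 in Hlt. rewrite (Hout z e w), (Hout z 0 w) in Hlt by (auto; lra).
    replace ((0 - 0) / e - q z w) with (- q z w) in Hlt by (field; lra). rewrite Rabs_Ropp in Hlt. lra. }
  assert (QS : forall z, sumL (nodup Vdec (K z)) (q z) = 0).
  { intros z. apply small_zero with (C := 1). intros eta Heta.
    destruct (ev_point _ (small_sum (nodup Vdec (K z)) (fun w e => R0 z e w) (fun w _ => HR z w) eta Heta))
      as [e [He0 [He1 Hlt]]].
    rewrite (sumL_ext _ (q z) (fun w => / e * (mu z e w - mu z 0 w) - R0 z e w)) by (intros; unfold R0; field; lra).
    rewrite sumL_minus, sumL_scal, sumL_minus, <- (lsum_sumL V (K z) (mu z e)), <- (lsum_sumL V (K z) (mu z 0)), !Hsum1 by lra.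
    replace (/ e * (1 - 1) - sumL (nodup Vdec (K z)) (R0 z e)) with (- sumL (nodup Vdec (K z)) (R0 z e)) by ring.
    rewrite Rabs_Ropp. eapply Rle_trans; [apply sumL_abs|]. rewrite Rabs_pos_eq in Hlt. lra.
    apply sumL_nonneg; intros; apply Rabs_pos. }
  assert (LapK : forall f z, Lap mu K f z = sumL (nodup Vdec (K z)) (fun w => f w * q z w)).
  { intros f z. unfold Lap. rewrite lsum_sumL.
    rewrite (sumL_ext _ _ (fun w => f w * q z w - f z * q z w)).
    rewrite sumL_minus, sumL_scal, QS. ring.
    intros w _. destruct (Vdec w z) as [->|]; unfold q; ring. }
  assert (Hxy0 : forall z, z = x \/ z = y -> forall w, In w (K z) -> In w S0).
  { intros z [->| ->] w Hw; unfold S0, Kxy; apply in_or_app; auto. }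
  assert (Transf : forall z F, z = x \/ z = y -> (forall w, ~ In w (K z) -> F w = 0) ->
      sumL S F = sumL (nodup Vdec (K z)) F).
  { intros z F Hz HF. apply sumL_subset; auto. apply NoDup_nodup.
    intros a Ha. apply HinS. apply (Hxy0 z Hz). apply nodup_In in Ha; auto.
    intros b _ Hb. apply HF. intro Hb'. apply Hb. apply nodup_In; auto. }
  assert (LapS : forall f z, z = x \/ z = y -> Lap mu K f z = sumL S (fun w => f w * q z w)).
  { intros f z Hz. rewrite LapK. symmetry. apply Transf; auto. intros w Hw. rewrite Q0; auto; ring. }
  assert (Sum1 : forall z e, z = x \/ z = y -> 0 <= e <= 1 -> sumL S (mu z e) = 1).
  { intros z e Hz He. rewrite (Transf z); auto. rewrite <- lsum_sumL. auto. }
  assert (Lap_shift : forall h c z, Lap mu K (fun w => h w - c) z = Lap mu K h z).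
  { intros h c z. unfold Lap. rewrite !lsum_sumL. apply sumL_ext. intros. destruct (Vdec a z); ring. }
  assert (HxS : In x S) by (apply HinS; apply Hxy0 with x; auto).
  assert (HyS : In y S) by (apply HinS; apply Hxy0 with y; auto).
  set (D := d x y).
  assert (HD : 0 < D).
  { destruct (Hd0 x y) as [|H0]; auto. exfalso. apply Hxy. apply Hdeq. auto. }
  set (C := sumL S (fun w => Rabs (q y w - q x w))).
  assert (HC : 0 <= C) by (apply sumL_nonneg; intros; apply Rabs_pos).
  pose (rho := fun e => sumL S (fun w => Rabs (d x w * (R0 y e w - R0 x e w)))).
  assert (Hrho : Small rho).
  { exact (small_sum S (fun w e => d x w * (R0 y e w - R0 x e w)) (fun w _ => small_lin _ _ _ (HR y w) (HR x w))). }
  assert (Hrho0 : forall e, 0 <= rho e) by (intros; apply sumL_nonneg; intros; apply Rabs_pos).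
  pose (Phi := fun e (h : V -> R) => sumL S (fun w => h w * (mu y e w - mu x e w))).
  assert (Hexp : forall e h, 0 < e <= 1 -> Phi e h = (h y - h x) + e * (Lap mu K h y - Lap mu K h x)
       + e * sumL S (fun w => (h w - h x) * (R0 y e w - R0 x e w))).
  { intros e h He.
    assert (Hm : forall z w, mu z e w = (if Vdec w z then 1 else 0) + e * (q z w + R0 z e w)).
    { intros z w. unfold R0. rewrite Hmu0. field. lra. }
    unfold Phi.
    rewrite (sumL_ext S _ (fun w => ((h w - h x) * (if Vdec w y then 1 else 0) - (h w - h x) * (if Vdec w x then 1 else 0))
       + e * ((h w - h x) * q y w - (h w - h x) * q x w) + e * ((h w - h x) * (R0 y e w - R0 x e w))
       + h x * (mu y e w - mu x e w))).
    2:{ intros w _. rewrite (Hm y w), (Hm x w). ring. }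
    rewrite !sumL_plus, !sumL_scal, !sumL_minus.
    rewrite (Sum1 y e), (Sum1 x e) by (auto; lra).
    rewrite (sumL_ext S (fun w => (h w - h x) * (if Vdec w y then 1 else 0)) (fun w => if Vdec w y then h w - h x else 0))
      by (intros; destruct Vdec; ring).
    rewrite (sumL_ext S (fun w => (h w - h x) * (if Vdec w x then 1 else 0)) (fun w => if Vdec w x then h w - h x else 0))
      by (intros; destruct Vdec; ring).
    rewrite !sumL_delta by auto.
    rewrite <- (Lap_shift h (h x) y), <- (Lap_shift h (h x) x), !LapS by auto.
    ring. }
  assert (Herr : forall e h, (forall w, In w S -> Rabs (h w - h x) <= d x w) ->
      Rabs (sumL S (fun w => (h w - h x) * (R0 y e w - R0 x e w))) <= rho e).
  { intros e h Hh. eapply Rle_trans; [apply sumL_abs|]. apply sumL_le. intros w Hw.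
    rewrite !Rabs_mult. rewrite (Rabs_pos_eq (d x w)) by auto. apply Rmult_le_compat_r; auto. apply Rabs_pos. }
  assert (Weak : forall e h pi, 0 < e <= 1 -> (forall u v, In u S0 -> In v S0 -> Rabs (h u - h v) <= d u v) ->
      coupling S0 (mu x e) (mu y e) pi -> Phi e h <= lsum S0 (fun u => lsum S0 (fun v => pi u v * d u v))).
  { intros e h pi He Hh [Hp0 [Hp1 Hp2]].
    rewrite lsum_sumL. fold S. rewrite (sumL_ext S _ (fun u => sumL S (fun v => pi u v * d u v))) by (intros; apply lsum_sumL).
    unfold Phi.
    apply Rle_trans with (sumL S (fun u => sumL S (fun v => h v * pi u v - h u * pi u v))).
    - rewrite (sumL_ext S (fun u => sumL S (fun v => h v * pi u v - h u * pi u v))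
        (fun u => sumL S (fun v => h v * pi u v) - h u * sumL S (fun v => pi u v))).
      2: { intros u _. rewrite sumL_minus, sumL_scal. auto. }
      rewrite sumL_minus, sumL_swap.
      rewrite (sumL_ext S (fun b => sumL S (fun a => h b * pi a b)) (fun v => h v * mu y e v)).
      2: { intros v Hv. rewrite sumL_scal. rewrite <- (Hp2 v (proj1 (HinS v) Hv)). rewrite lsum_sumL. auto. }
      rewrite (sumL_ext S (fun u => h u * sumL S (fun v => pi u v)) (fun u => h u * mu x e u)).
      2: { intros u Hu. rewrite <- (Hp1 u (proj1 (HinS u) Hu)), lsum_sumL. auto. }
      rewrite <- sumL_minus. right. apply sumL_ext. intros; ring.
    - apply sumL_le. intros u Hu. apply sumL_le. intros v Hv.
      assert (0 <= pi u v) by (apply Hp0; apply HinS; auto).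
      assert (h v - h u <= d u v).
      { specialize (Hh u v (proj1 (HinS u) Hu) (proj1 (HinS v) Hv)). rewrite <- Rabs_Ropp in Hh.
        pose proof (Rle_abs (-(h u - h v))). lra. }
      replace (h v * pi u v - h u * pi u v) with (pi u v * (h v - h u)) by ring. apply Rmult_le_compat_l; auto. }
  assert (Hdlip : forall u v, Rabs (d x u - d x v) <= d u v).
  { intros u v. apply Rabs_le. pose proof (Hdtri x v u). pose proof (Hdtri x u v). rewrite (Hdsym v u) in H. lra. }
  assert (Hdxx : d x x = 0) by (apply Hdeq; auto).
  assert (Hdyx : d y x = D) by (unfold D; apply Hdsym).
  set (Set_ := fun c => exists f : V -> R, (forall u v, In u S0 -> In v S0 -> Rabs (f u - f v) <= d u v) /\
      grad d x y f = 1 /\ c = grad d y x (Lap mu K f)).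
  assert (HSet0 : Set_ (grad d y x (Lap mu K (d x)))).
  { exists (d x). split; [intros; apply Hdlip|split; auto]. unfold grad. rewrite Hdxx. fold D. field. lra. }
  assert (LapDiff : forall f, Lap mu K f y - Lap mu K f x = sumL S (fun w => (f w - f x) * (q y w - q x w))).
  { intros f. rewrite <- (Lap_shift f (f x) y), <- (Lap_shift f (f x) x), !LapS by auto.
    rewrite <- sumL_minus. apply sumL_ext; intros; ring. }
  set (m0 := - sumL S (fun w => d x w * Rabs (q y w - q x w)) / D).
  assert (Hlow : forall c, Set_ c -> m0 <= c).
  { intros c [f [Hf [_ ->]]]. unfold grad. rewrite Hdyx. unfold m0, Rdiv.
    apply Rmult_le_compat_r; [left; apply Rinv_0_lt_compat; auto|].
    assert (sumL S (fun w => (f w - f x) * (q y w - q x w)) <= sumL S (fun w => d x w * Rabs (q y w - q x w))).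
    { apply sumL_le. intros w Hw. eapply Rle_trans; [apply Rle_abs|]. rewrite Rabs_mult.
      apply Rmult_le_compat_r; [apply Rabs_pos|]. rewrite Hdsym. apply Hf; apply HinS; auto. }
    rewrite <- LapDiff in H. lra. }
  destruct (glb_finite Set_ _ m0 HSet0 Hlow) as [kap Hkap].
  assert (Hglb : is_glb_Rbar Set_ kap) by (rewrite <- Hkap; apply Glb_Rbar_correct).
  assert (Hkap_le : forall c, Set_ c -> kap <= c).
  { intros c Hc. destruct Hglb as [Hlb _]. apply (Hlb c Hc). }
  exists kap.
  assert (Hup : forall e, 0 < e <= 1 -> e * C <= 1 -> forall h : V -> R,
      (forall u v, In u S -> In v S -> Rabs (h u - h v) <= d u v) ->
      Phi e h <= D - e * D * kap + e * rho e).
  { intros e He HeC h Hh.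
    set (t := D - (h y - h x)).
    assert (Ht : 0 <= t).
    { unfold t. specialize (Hh y x HyS HxS). rewrite Hdyx in Hh. pose proof (Rle_abs (h y - h x)). lra. }
    assert (Hhx : forall w, In w S -> Rabs (h w - h x) <= d x w).
    { intros w Hw. rewrite Hdsym. apply Hh; auto. }
    set (g := fun w => Rmin (h w - h x + t) (d x w)).
    assert (HgS : Set_ (grad d y x (Lap mu K g))).
    { exists g. split; [|split; auto].
      - intros u v Hu Hv. unfold g. apply Rmin_lip; auto.
        replace (h u - h x + t - (h v - h x + t)) with (h u - h v) by ring. apply Hh; apply HinS; auto.
      - unfold grad, g. rewrite Hdxx. fold D.
        replace (h x - h x + t) with t by ring. replace (h y - h x + t) with D by (unfold t; ring).
        rewrite (Rmin_right t 0) by auto. rewrite (Rmin_left D D) by lra. field. lra. }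
    pose proof (Hkap_le _ HgS) as Hcg. unfold grad in Hcg. rewrite Hdyx in Hcg.
    assert (Hgb : forall w, In w S -> 0 <= g w - (h w - h x) <= t).
    { intros w Hw. unfold g. split.
      - assert (h w - h x <= Rmin (h w - h x + t) (d x w)).
        { apply Rmin_glb. lra. specialize (Hhx w Hw). pose proof (Rle_abs (h w - h x)). lra. }
        lra.
      - pose proof (Rmin_l (h w - h x + t) (d x w)). lra. }
    assert (Hdiff : (Lap mu K h y - Lap mu K h x) - (Lap mu K g y - Lap mu K g x) <= t * C).
    { rewrite !LapDiff. rewrite <- sumL_minus. unfold C. rewrite <- sumL_scal. apply sumL_le. intros w Hw.
      eapply Rle_trans; [apply Rle_abs|].
      replace ((h w - h x) * (q y w - q x w) - (g w - g x) * (q y w - q x w)) with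
        (((h w - h x) - g w + g x) * (q y w - q x w)) by ring.
      assert (Hgx : g x = 0).
      { unfold g. replace (h x - h x + t) with t by ring. rewrite Hdxx. apply Rmin_right; auto. }
      rewrite Hgx, Rplus_0_r, Rabs_mult. apply Rmult_le_compat_r; [apply Rabs_pos|].
      specialize (Hgb w Hw). apply Rabs_le. lra. }
    assert (HLg : Lap mu K g y - Lap mu K g x = - D * ((Lap mu K g x - Lap mu K g y) / D)) by (field; lra).
    assert (F1 : D * kap <= D * ((Lap mu K g x - Lap mu K g y) / D)) by (apply Rmult_le_compat_l; lra).
    set (Lh := Lap mu K h y - Lap mu K h x) in *.
    assert (F2 : e * Lh <= e * (- D * kap + t * C)) by (apply Rmult_le_compat_l; lra).
    assert (F3 : e * (t * C) <= t) by (replace (e * (t * C)) with (t * (e * C)) by ring;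
      rewrite <- (Rmult_1_r t) at 2; apply Rmult_le_compat_l; auto).
    set (Er := sumL S (fun w => (h w - h x) * (R0 y e w - R0 x e w))).
    assert (F4 : e * Er <= e * rho e).
    { apply Rmult_le_compat_l; [lra|]. eapply Rle_trans; [apply Rle_abs|]. apply Herr; auto. }
    rewrite Hexp by auto. fold Lh Er.
    replace (h y - h x) with (D - t) by (unfold t; ring). 
    assert (e * (- D * kap + t * C) = - (e * D * kap) + e * (t * C)) by ring.
    lra. }
  assert (Hlo : forall e, 0 < e <= 1 -> forall f, (forall u v, In u S0 -> In v S0 -> Rabs (f u - f v) <= d u v) ->
      grad d x y f = 1 -> D - e * D * grad d y x (Lap mu K f) - e * rho e <= Phi e f).
  { intros e He f Hf Hg1. rewrite Hexp by auto. unfold grad in *. rewrite Hdyx. fold D in Hg1.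
    assert (Hfy : f y - f x = D) by (apply Rmult_eq_reg_r with (/ D); [|apply Rinv_neq_0_compat; lra];
      rewrite Rinv_r by lra; exact Hg1).
    rewrite Hfy.
    set (Er := sumL S (fun w => (f w - f x) * (R0 y e w - R0 x e w))).
    assert (F4 : - (e * rho e) <= e * Er).
    { assert (Rabs Er <= rho e). { apply Herr. intros w Hw. rewrite Hdsym. apply Hf; apply HinS; auto. }
      assert (- rho e <= Er) by (pose proof (Rle_abs (- Er)); rewrite Rabs_Ropp in H0; lra).
      replace (- (e * rho e)) with (e * (- rho e)) by ring. apply Rmult_le_compat_l; lra. }
    assert (e * D * ((Lap mu K f x - Lap mu K f y) / D) = - (e * (Lap mu K f y - Lap mu K f x))) by (field; lra).
    lra. }
  assert (HW : forall e, 0 < e <= 1 -> e * C <= 1 -> forall f,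
      (forall u v, In u S0 -> In v S0 -> Rabs (f u - f v) <= d u v) -> grad d x y f = 1 ->
      D - e * D * grad d y x (Lap mu K f) - e * rho e <= W1 d S0 (mu x e) (mu y e) <= D - e * D * kap + e * rho e).
  { intros e He HeC f Hf Hg1.
    destruct (duality V d Hd S HS (mu x e) (mu y e)
      (fun u _ => Hnn x e u ltac:(lra)) (fun u _ => Hnn y e u ltac:(lra))
      (Sum1 x e (or_introl eq_refl) ltac:(lra)) (Sum1 y e (or_intror eq_refl) ltac:(lra))
      (D - e * D * kap + e * rho e) (Hup e He HeC)) as [pi [Hp0 [Hp1 [Hp2 Hcost]]]].
    assert (Hcoup : coupling S0 (mu x e) (mu y e) pi).
    { split; [|split].
      - intros u v Hu Hv. apply Hp0; apply HinS; auto.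
      - intros u Hu. rewrite lsum_sumL. apply Hp1. apply HinS; auto.
      - intros v Hv. rewrite lsum_sumL. apply Hp2. apply HinS; auto. }
    unfold W1. apply W1_bounds with (c1 := lsum S0 (fun u => lsum S0 (fun v => pi u v * d u v))).
    - exists pi; split; auto.
    - rewrite lsum_sumL. fold S. rewrite (sumL_ext S _ (fun u => sumL S (fun v => pi u v * d u v))) by (intros; apply lsum_sumL).
      auto.
    - intros c [pi' [Hc' ->]]. eapply Rle_trans; [apply (Hlo e He f Hf Hg1)|]. apply Weak; auto. }
  split; [|exact Hglb].
  apply filterlim_locally. intros eps.
  destruct (classic (exists c, Set_ c /\ c < kap + eps / 2)) as [[c [[f [Hf [Hg1 Hceq]]] Hc]]|Hno].
  2: { exfalso. destruct Hglb as [_ Hgl].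
       assert (Rbar_le (kap + eps / 2) kap).
       { apply Hgl. intros c Hc. simpl. apply Rnot_lt_le. intro. apply Hno. exists c; auto. }
       simpl in H. destruct eps as [eps Heps]; simpl in *; lra. }
  subst c.
  assert (Hc1 : 0 < Rmin 1 (1 / (C + 1))) by (apply Rmin_glb_lt; [lra|apply Rdiv_lt_0_compat; lra]).
  assert (Heps : 0 < D * eps / 2) by (destruct eps; simpl; apply Rdiv_lt_0_compat; [apply Rmult_lt_0_compat|]; lra).
  eapply filter_imp; [|exact (filter_and _ _ (ev_small _ Hc1) (Hrho _ Heps))].
  intros e [[He0 He1] Hr].
  assert (He1' : e < 1) by (eapply Rlt_le_trans; [exact He1|apply Rmin_l]).
  assert (HeC : e * C <= 1).
  { assert (e < 1 / (C + 1)) by (eapply Rlt_le_trans; [exact He1|apply Rmin_r]).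
    assert (e * (C + 1) < 1).
    { apply Rmult_lt_reg_r with (/ (C + 1)). apply Rinv_0_lt_compat; lra.
      rewrite Rmult_assoc, Rinv_r, Rmult_1_r, Rmult_1_l by lra. unfold Rdiv in H; lra. }
    lra. }
  rewrite Rabs_pos_eq in Hr by auto.
  destruct (HW e ltac:(lra) HeC f Hf Hg1) as [Wlo Whi].
  change (Rabs (Ric_eps d mu K e x y / e - kap) < eps). unfold Ric_eps. fold S0 D.
  set (W := W1 d S0 (mu x e) (mu y e)) in *.
  set (cf := grad d y x (Lap mu K f)) in *.
  set (Q := (1 - W / D) / e).
  assert (HQ : Q * (e * D) = D - W) by (unfold Q; field; lra).
  assert (HeD : 0 < e * D) by (apply Rmult_lt_0_compat; lra).
  assert (G1 : e * D * cf < e * D * (kap + eps / 2)) by (apply Rmult_lt_compat_l; auto).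
  assert (G2 : e * rho e < e * (D * eps / 2)) by (apply Rmult_lt_compat_l; auto).
  assert (Hu : Q < kap + eps).
  { apply Rmult_lt_reg_r with (e * D); auto. rewrite HQ.
    assert ((kap + eps) * (e * D) = e * D * (kap + eps / 2) + e * (D * eps / 2)) by field. lra. }
  assert (Hl : kap - eps < Q).
  { apply Rmult_lt_reg_r with (e * D); auto. rewrite HQ.
    assert ((kap - eps) * (e * D) = e * D * kap - e * (D * eps / 2) - e * (D * eps / 2)) by field. 
    assert (0 < e * (D * eps / 2)) by (apply Rmult_lt_0_compat; lra). lra. }
  apply Rabs_def1; lra.
Qed.
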